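(* Let $n\ge1$, $v>0$, $0\le\rho<\frac12v$, and let $B=(b_{jk})_{j,k=0}^n$ with $b_{jk}=v-k$ if $j>k$, $b_{kk}=\frac v2-k-\rho$, $b_{jk}=-j$ if $j<k$. The unique ESS $\mathbf{p}=(p_0,\dots,p_n)^T$ of $B$ is given as follows. If $v\ge2n+2\rho$, then $p_0=\dots=p_{n-1}=0$, $p_n=1$. Otherwise there is a unique index $s\in\{0,\dots,n-1\}$ such that $n-1+\rho\le\frac v2+s<n+\rho$, and $$p_k=\frac1c\Big(-\frac v2-\rho\Big)^k\Big\{u_{s-k+1}+\Big(s+1-n+\frac v2+\rho\Big)u_{s-k}+(s+1-n)\Big(\frac v2+\rho\Big)u_{s-k-1}\Big\},\quad0\le k\le s,$$ $$p_k=0,\quad s+1\le k\le n-1,\qquad p_n=\frac1c\Big(-\frac v2-\rho\Big)^{s+1},$$ where $\gamma=\sqrt{\frac{v^2}{4}-\rho^2}$, $u_k=(-i\gamma)^kU_k\big(-\frac{i(2\rho+1)}{2\gamma}\big)$ and $$c=-u_{s+2}+(n-s-1-2\rho)u_{s+1}+\{2\rho(n-s-1)+\gamma^2\}u_s-(n-s-1)\gamma^2u_{s-1}.$$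
   Context: $U_m$ denotes the $m$th Chebyshev polynomial of the second kind (evaluated at complex arguments as a polynomial), with the convention $U_{-1}\equiv0$; $i=\sqrt{-1}$. Strategies are indexed $0,\dots,n$, $\overline\Delta=\{\mathbf{q}\in[0,1]^{n+1}:\sum q_j=1\}$. $\mathbf{p}\in\overline\Delta$ is an ESS for $B$ if (i) $\mathbf{p}^TB\mathbf{p}\ge\mathbf{q}^TB\mathbf{p}$ for all $\mathbf{q}\in\overline\Delta$ and (ii) whenever $\mathbf{q}\ne\mathbf{p}$ and $\mathbf{p}^TB\mathbf{p}=\mathbf{q}^TB\mathbf{p}$, then $\mathbf{p}^TB\mathbf{q}>\mathbf{q}^TB\mathbf{q}$. *)

(* Defs.v *)
From HB Require Import structures.
From mathcomp Require Import all_boot all_order all_algebra.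
From mathcomp Require Import complex.
Set Implicit Arguments. Unset Strict Implicit. Unset Printing Implicit Defensive.
Import Order.TTheory GRing.Theory Num.Theory.
Local Open Scope ring_scope.

Fixpoint chebU_pair {T : comNzRingType} (m : nat) : {poly T} * {poly T} :=
  (* returns (U_m, U_{m-1}) with U_{-1} = 0 *)
  match m with
  | 0%N => (1, 0)
  | m'.+1 => let: (a, b) := chebU_pair m' in ((2%:R *: 'X) * a - b, a)
  end.
Definition chebU {T : comNzRingType} (m : nat) : {poly T} := (chebU_pair m).1.

(* U indexed by an integer, with the convention U_{-1} = 0 (and U_m = 0 for
   all negative m; only m = -1 is ever used). *)
Definition chebUz {T : comNzRingType} (m : int) : {poly T} :=
  match m with Posz k => chebU k | Negz _ => 0 end.

Definition simplex {R : realFieldType} (n : nat) (q : 'I_n.+1 -> R) : Prop :=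
  (forall j, 0 <= q j <= 1) /\ \sum_(j < n.+1) q j = 1.

Definition bform {R : realFieldType} (n : nat) (B : 'M[R]_n.+1)
  (x y : 'I_n.+1 -> R) : R :=
  \sum_(j < n.+1) \sum_(k < n.+1) x j * B j k * y k.

Definition isESS {R : realFieldType} (n : nat) (B : 'M[R]_n.+1)
  (p : 'I_n.+1 -> R) : Prop :=
  simplex p /\
  (forall q, simplex q -> bform B q p <= bform B p p) /\
  (forall q, simplex q -> q <> p -> bform B p p = bform B q p ->
     bform B q q < bform B p q).

Definition payB {R : realFieldType} (n : nat) (v rho : R) : 'M[R]_n.+1 :=
  \matrix_(j, k) (if (k < j)%N then v - (k : nat)%:R
                  else if j == k then v / 2 - (k : nat)%:R - rho
                  else - (j : nat)%:R).

Local Open Scope complex_scope.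

Definition gam {R : rcfType} (v rho : R) : R := Num.sqrt (v ^+ 2 / 4 - rho ^+ 2).

Definition uu {R : rcfType} (v rho : R) (m : int) : R[i] :=
  let g : R[i] := (gam v rho)%:C in
  (- 'i * g) ^ m * (chebUz m).[- 'i * (2 * rho + 1)%:C / (2 * g)].

Definition cc {R : rcfType} (n s : nat) (v rho : R) : R[i] :=
  let u := uu v rho in
  let g2 : R[i] := ((gam v rho) ^+ 2)%:C in
  let r : R[i] := rho%:C in
  let N : R[i] := (n - s - 1)%:R in  (* s < n, so this is the integer n-s-1 *)
  - u (s + 2)%:Z + (N - 2 * r) * u (s + 1)%:Z
  + (2 * r * N + g2) * u s%:Z - N * g2 * u (s%:Z - 1).

Definition pform {R : rcfType} (n s : nat) (v rho : R) (k : nat) : R[i] :=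
  let u := uu v rho in
  let c := cc n s v rho in
  let a : R[i] := (v / 2 + rho)%:C in
  if (k <= s)%N then
    c^-1 * (- a) ^+ k *
      (u (s%:Z - k%:Z + 1) + ((s%:R + 1 - n%:R) + a) * u (s%:Z - k%:Z)
       + (s%:R + 1 - n%:R) * a * u (s%:Z - k%:Z - 1))
  else if (k < n)%N then 0
  else c^-1 * (- a) ^+ s.+1.

(* Main.v *)
Require Import Defs.
From HB Require Import structures.
From mathcomp Require Import all_boot all_order all_algebra.
From mathcomp Require Import complex.
From mathcomp Require Import ring lra zify.
From Stdlib Require Import Classical FunctionalExtensionality.
Set Implicit Arguments. Unset Strict Implicit. Unset Printing Implicit Defensive.
Import Order.TTheory GRing.Theory Num.Theory.
Local Open Scope ring_scope.

Section Sums.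
Variable R : realFieldType.
Implicit Types X : nat -> R.

Definition Tl N X (j : nat) : R := \sum_(k < N) ((j < k)%N%:R * X k).

Lemma sum_ind N X j : (j < N)%N -> \sum_(k < N) (((k : nat) == j)%:R * X k) = X j.
Proof.
move=> hj; rewrite (bigD1 (Ordinal hj)) //= eqxx mul1r big1 ?addr0 // => k hk.
case: eqP => [hkj|]; last by rewrite mul0r.
by move: hk; rewrite -(inj_eq val_inj) /= hkj eqxx.
Qed.

Lemma Tl_step N X j : (j.+1 < N)%N -> Tl N X j = X j.+1 + Tl N X j.+1.
Proof.
move=> hj; rewrite /Tl -(sum_ind X hj) -big_split /=; apply: eq_bigr => k _.
rewrite -mulrDl; congr (_ * _); rewrite -natrD; congr (_%:R).
by case: (ltngtP j.+1 k).
Qed.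

Lemma sum_Tl N X : (0 < N)%N -> \sum_(k < N) X k = X 0%N + Tl N X 0.
Proof.
move=> hN; rewrite /Tl -(sum_ind X hN) -big_split /=; apply: eq_bigr => k _.
rewrite -mulrDl; case: k => [[|k] hk] /=; by rewrite ?addr0 ?add0r mul1r.
Qed.

Lemma Tl_scale N X c j : Tl N (fun k => c * X k) j = c * Tl N X j.
Proof. by rewrite /Tl mulr_sumr; apply: eq_bigr => k _; ring. Qed.

End Sums.
Section B.
Variable R : realFieldType.
Implicit Types X : nat -> R.
Definition bb (v rho : R) (j k : nat) : R :=
  if (k < j)%N then v - k%:R else if j == k then v / 2 - k%:R - rho else - j%:R.
Definition BX n v rho X j := \sum_(k < n.+1) bb v rho j k * X k.

Lemma bb_diff v rho j k : bb v rho j.+1 k - bb v rho j k =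
  (v/2 + rho) * (k == j)%:R + (v/2 - rho) * (k == j.+1)%:R - (j < k)%N%:R.
Proof.
rewrite /bb; have [hkj|hjk|->] := ltngtP k j.
- have h1 : (k < j.+1)%N by lia.
  rewrite h1 (ltn_eqF h1) /=; by field.
- have [h2|h2|->] := ltngtP k j.+1.
  + lia.
  + rewrite /=; by field.
  + rewrite /=; by field.
- rewrite ltnSn (ltn_eqF (ltnSn j)) /=; by field.
Qed.
End B.
Section N.
Variable R : realFieldType.
Implicit Types X : nat -> R.

Lemma Dlem n v rho X j : (j < n)%N ->
  BX n v rho X j.+1 - BX n v rho X j =
  (v/2 + rho) * X j + (v/2 - rho) * X j.+1 - Tl n.+1 X j.
Proof.
move=> hj.
have hj1 : (j < n.+1)%N by lia.
have hj2 : (j.+1 < n.+1)%N by lia.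
rewrite /BX -sumrB.
under eq_bigr => k _ do rewrite -mulrBl bb_diff mulrBl mulrDl -!mulrA.
rewrite sumrB big_split /= -!mulr_sumr (sum_ind X hj1) (sum_ind X hj2).
by [].
Qed.

Lemma Tl_last n s X j : (s <= j)%N -> (j < n)%N ->
  (forall k, (s < k)%N -> (k < n)%N -> X k = 0) -> Tl n.+1 X j = X n.
Proof.
move=> hsj hjn hz; rewrite /Tl -(sum_ind X (ltnSn n)); apply: eq_bigr => k _.
have hk := ltn_ord k.
case: (ltnP j k) => h /=.
- case: (ltngtP k n) => h2 /=.
  + by rewrite hz ?mulr0 ?mul0r //; lia.
  + lia.
  + by [].
- by rewrite (ltn_eqF (leq_ltn_trans h hjn)) !mul0r.
Qed.

Lemma profile n s v rho X : (s < n)%N ->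
  (forall j, (j < s)%N -> Tl n.+1 X j = (v/2 + rho) * X j + (v/2 - rho) * X j.+1) ->
  (forall k, (s < k)%N -> (k < n)%N -> X k = 0) ->
  (v/2 + rho) * X s = (n%:R - s%:R - (v/2 - rho)) * X n ->
  forall k, (k <= n)%N ->
  BX n v rho X k = BX n v rho X 0 +
     (if (k <= s)%N then 0 else if (k < n)%N then (n%:R - k%:R - (v/2 - rho)) * X n else 0).
Proof.
move=> hsn hT hz h3; elim=> [|k IH] hk; first by rewrite leq0n addr0.
have hkn : (k < n)%N by lia.
have := Dlem v rho X hkn => D.
have -> : BX n v rho X k.+1 = BX n v rho X k + ((v/2 + rho) * X k + (v/2 - rho) * X k.+1 - Tl n.+1 X k).
  by rewrite -D; ring.
rewrite IH ?(ltnW hk) //.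
case: (ltnP k s) => hks.
- rewrite (ltnW hks) hT //; by field.
- rewrite (Tl_last hks hkn hz).
  case: (leqP k s) => hks2.
  + have ek : k = s by lia. subst k.

    case: (ltnP s.+1 n) => h4.
    * rewrite (hz s.+1) //. rewrite h3 -addn1 natrD; by field.
    * have en : n = s.+1 by lia. subst n. rewrite h3 -addn1 natrD; by field.
  + rewrite hkn (hz k) //.
    case: (ltnP k.+1 n) => h4.
    * have hz1 : X k.+1 = 0 by apply: hz; lia.
      rewrite hz1 -addn1 natrD; by field.
    * have en : n = k.+1 by lia. subst n. rewrite -addn1 natrD; by field.
Qed.
End N.
Section SecQ.
Variable R : realFieldType.
Implicit Types X : nat -> R.

Lemma sum_lt N m : (m <= N)%N -> \sum_(t < N) ((t < m)%N%:R : R) = m%:R.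
Proof.
elim: m => [|m IH] hm; first by rewrite big1.
have hmN : (m < N)%N by lia.
have e1 := sum_ind (fun _ => (1:R)) hmN.
have -> : (m.+1%:R : R) = \sum_(t < N) ((t < m)%N%:R : R) + \sum_(t < N) (((t:nat) == m)%:R * 1).
  by rewrite e1 IH ?(ltnW hm) // -addn1 natrD.
rewrite -big_split /=.
apply: eq_bigr => t _; rewrite mulr1 -natrD; congr (_%:R).
by rewrite ltnS leq_eqVlt orbC; case: ltngtP.
Qed.

Lemma min_sum n j k : (j <= n)%N -> (k <= n)%N ->
  ((minn j k)%:R : R) = \sum_(t < n.+1) (t < j)%N%:R * (t < k)%N%:R.
Proof.
move=> hj hk; rewrite -(sum_lt (N:=n.+1) (m:=minn j k)); last by lia.
apply: eq_bigr => t _; by rewrite -natrM ltn_min; case: (t < j)%N; case: (t < k)%N.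
Qed.
End SecQ.

Section Quad.
Variable R : realFieldType.
Implicit Types X : nat -> R.

Lemma bb_dec (v rho : R) j k : bb v rho j k =
  v * ((k < j)%N%:R + (j == k)%:R / 2) - rho * (j == k)%:R - (minn j k)%:R.
Proof.
rewrite /bb; case: (ltngtP k j) => h /=; by field.
Qed.

Lemma exchange2 N (F : nat -> nat -> R) :
  \sum_(j < N) \sum_(k < N) F j k = \sum_(j < N) \sum_(k < N) F k j.
Proof. by rewrite exchange_big. Qed.

Lemma vpart N X : \sum_(j < N) \sum_(k < N) X j * X k * ((k < j)%N%:R + (j == k)%:R / 2)
   = (\sum_(k < N) X k) ^+ 2 / 2.
Proof.
set A := \sum_(j < N) \sum_(k < N) X j * X k * (k < j)%N%:R.
set D := \sum_(j < N) \sum_(k < N) X j * X k * (j == k)%:R.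
have hA : \sum_(j < N) \sum_(k < N) X j * X k * (j < k)%N%:R = A.
  rewrite /A exchange_big /=; apply: eq_bigr => j _; apply: eq_bigr => k _; ring.
have hS : (\sum_(k < N) X k) ^+ 2 = A + A + D.
  rewrite expr2 mulr_suml -{1}hA /A /D -!big_split /=; apply: eq_bigr => j _.
  rewrite mulr_sumr -!big_split /=; apply: eq_bigr => k _.
  rewrite -(inj_eq val_inj) /= eq_sym; case: (ltngtP k j) => h /=; ring.
have -> : \sum_(j < N) \sum_(k < N) X j * X k * ((k < j)%N%:R + (j == k)%:R / 2) = A + D / 2.
  rewrite /A /D mulr_suml -big_split; apply: eq_bigr => j _ /=.
  rewrite mulr_suml -big_split; apply: eq_bigr => k _ /=; by field.
rewrite hS; by field.
Qed.

Lemma mpart n X : \sum_(j < n.+1) \sum_(k < n.+1) X j * X k * (minn j k)%:R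
   = \sum_(t < n.+1) (Tl n.+1 X t) ^+ 2.
Proof.
have e : forall t, Tl n.+1 X t ^+ 2 = \sum_(j < n.+1) \sum_(k < n.+1)
           ((t < j)%N%:R * X j) * ((t < k)%N%:R * X k).
  move=> t; rewrite expr2 /Tl mulr_suml; apply: eq_bigr => j _; by rewrite mulr_sumr.
under [RHS]eq_bigr => t _ do rewrite e.
rewrite [RHS]exchange_big /=; apply: eq_bigr => j _.
rewrite [RHS]exchange_big /=; apply: eq_bigr => k _.
rewrite (@min_sum R n j k (ltn_ord j) (ltn_ord k)) mulr_sumr; apply: eq_bigr => t _; ring.
Qed.

Lemma quad n (v rho : R) X :
  \sum_(j < n.+1) \sum_(k < n.+1) X j * bb v rho j k * X k =
  v / 2 * (\sum_(k < n.+1) X k) ^+ 2 - rho * \sum_(k < n.+1) X k ^+ 2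
  - \sum_(t < n.+1) (Tl n.+1 X t) ^+ 2.
Proof.
rewrite -mpart.
transitivity (v * ((\sum_(k < n.+1) X k) ^+ 2 / 2) - rho * \sum_(k < n.+1) X k ^+ 2
  - \sum_(j < n.+1) \sum_(k < n.+1) X j * X k * (minn j k)%:R); last by field.
rewrite -vpart.
have hD : \sum_(k < n.+1) X k ^+ 2 = \sum_(j < n.+1) \sum_(k < n.+1) X j * X k * (j == k)%:R.
  apply: eq_bigr => j _; rewrite expr2 -(sum_ind (fun k => X j * X k) (ltn_ord j)) /=.
  by apply: eq_bigr => k _; rewrite eq_sym; ring.
rewrite hD !mulr_sumr -!sumrB; apply: eq_bigr => j _.
rewrite !mulr_sumr -!sumrB; apply: eq_bigr => k _.
rewrite bb_dec; ring.
Qed.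
End Quad.
Section ND.
Variable R : realFieldType.
Implicit Types X : nat -> R.

Lemma nd_zero n (v rho : R) X : 0 <= rho -> \sum_(k < n.+1) X k = 0 ->
  0 <= \sum_(j < n.+1) \sum_(k < n.+1) X j * bb v rho j k * X k ->
  forall k, (k <= n)%N -> X k = 0.
Proof.
move=> hr hS; rewrite quad hS expr0n /= mulr0 add0r => h.
have hD : 0 <= \sum_(k < n.+1) X k ^+ 2 by apply: sumr_ge0 => k _; exact: sqr_ge0.
have hG : 0 <= \sum_(t < n.+1) Tl n.+1 X t ^+ 2 by apply: sumr_ge0 => k _; exact: sqr_ge0.
have hrD := mulr_ge0 hr hD.
have hG0 : \sum_(t < n.+1) Tl n.+1 X t ^+ 2 = 0 by lra.
have hT : forall t, (t <= n)%N -> Tl n.+1 X t = 0.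
  move=> t ht.
  have H0 : forall i : 'I_n.+1, true -> Tl n.+1 X i ^+ 2 = 0.
    by apply: psumr_eq0P => // i _; exact: sqr_ge0.
  have := H0 (Ordinal (ht : (t < n.+1)%N)) isT.
  by move=> /eqP; rewrite sqrf_eq0 => /eqP.
case=> [|k] hk.
- by have := sum_Tl X (ltn0Sn n); rewrite hS hT // addr0 => /esym.
- have := Tl_step X (hk : (k.+1 < n.+1)%N); rewrite !hT //; last by lia.
  by rewrite addr0 => /esym.
Qed.
End ND.


Section G.
Variable R : realFieldType.

Definition ext n (x : 'I_n.+1 -> R) (k : nat) : R := x (inord k).

Lemma ext_val n (x : 'I_n.+1 -> R) (j : 'I_n.+1) : ext x j = x j.
Proof. by rewrite /ext inord_val. Qed.

Lemma payB_bb n (v rho : R) (j k : 'I_n.+1) : payB n v rho j k = bb v rho j k.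
Proof. by rewrite mxE. Qed.

Lemma bform_nat n (v rho : R) x y : bform (payB n v rho) x y =
  \sum_(j < n.+1) \sum_(k < n.+1) ext x j * bb v rho j k * ext y k.
Proof.
by apply: eq_bigr => j _; apply: eq_bigr => k _; rewrite !ext_val payB_bb.
Qed.

Lemma bform_quad n (B : 'M[R]_n.+1) x y :
  bform B (fun j => x j - y j) (fun j => x j - y j) =
  bform B x x - bform B x y - bform B y x + bform B y y.
Proof.
rewrite /bform -!sumrB -big_split /=; apply: eq_bigr => j _.
rewrite -!sumrB -big_split /=; apply: eq_bigr => k _; ring.
Qed.

Definition Nashp n (B : 'M[R]_n.+1) p := forall q, simplex q -> bform B q p <= bform B p p.

Lemma strong n (v rho : R) p : 0 <= rho -> simplex p -> Nashp (payB n v rho) p ->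
  forall q, simplex q -> q <> p -> bform (payB n v rho) q q < bform (payB n v rho) p q.
Proof.
move=> hr hp hN q hq hqp; rewrite ltNge; apply/negP => hle.
apply: hqp; apply: functional_extensionality => j.
set x := fun j => q j - p j.
have hS : \sum_(k < n.+1) ext x k = 0.
  under eq_bigr => k _ do rewrite ext_val.
  by rewrite /x sumrB hp.2 hq.2 subrr.
have hQ : 0 <= \sum_(j < n.+1) \sum_(k < n.+1) ext x j * bb v rho j k * ext x k.
  rewrite -bform_nat bform_quad; have := hN q hq; lra.
have := nd_zero hr hS hQ (ltn_ord j) => /eqP.
by rewrite ext_val /x subr_eq0 => /eqP.
Qed.

Lemma ess_of_nash n (v rho : R) p : 0 <= rho -> simplex p -> Nashp (payB n v rho) p ->
  isESS (payB n v rho) p.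
Proof.
move=> hr hp hN; split => //; split => // q hq hqp _; exact: strong.
Qed.

Lemma uniq_ess n (v rho : R) p : 0 <= rho -> simplex p -> Nashp (payB n v rho) p ->
  forall q, isESS (payB n v rho) q -> q = p.
Proof.
move=> hr hp hN q [hq [hqN _]].
destruct (Classical_Prop.classic (q = p)) as [e|hne]; first exact: e.
have h1 := strong hr hp hN hq hne; have h2 := hqN p hp; clear hne; exfalso; lra.
Qed.

Lemma simplex_of n (P : nat -> R) : (forall k, (k <= n)%N -> 0 <= P k) ->
  \sum_(k < n.+1) P k = 1 -> simplex (fun k : 'I_n.+1 => P k).
Proof.
move=> h0 h1; split => // j; have hj : (j <= n)%N by have := ltn_ord j.
rewrite h0 //=.
rewrite -h1 (bigD1 j) //= lerDl; apply: sumr_ge0 => k _; apply: h0; by have := ltn_ord k.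
Qed.

Lemma nash_of n (v rho : R) (P : nat -> R) M :
  (forall j, (j <= n)%N -> BX n v rho P j <= M) ->
  (forall j, (j <= n)%N -> P j != 0 -> BX n v rho P j = M) ->
  \sum_(k < n.+1) P k = 1 ->
  Nashp (payB n v rho) (fun k : 'I_n.+1 => P k).
Proof.
move=> hle heq h1.
have hb : forall q, bform (payB n v rho) q (fun k : 'I_n.+1 => P k) =
    \sum_(j < n.+1) q j * BX n v rho P j.
  move=> q; apply: eq_bigr => j _; rewrite /BX mulr_sumr; apply: eq_bigr => k _.
  by rewrite payB_bb mulrA.
move=> q hq; rewrite !hb.
have -> : \sum_(j < n.+1) P j * BX n v rho P j = \sum_(j < n.+1) P j * M.
  apply: eq_bigr => j _; case: (eqVneq (P j) 0) => h; first by rewrite h !mul0r.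
  by rewrite heq //; have := ltn_ord j.
rewrite -mulr_suml h1 mul1r.
have -> : M = \sum_(j < n.+1) q j * M by rewrite -mulr_suml hq.2 mul1r.
apply: ler_sum => j _; apply: ler_wpM2l; first by case: (hq.1 j) => /andP [].
by apply: hle; have := ltn_ord j.
Qed.
End G.

Local Open Scope complex_scope.

Lemma chebU_rec (T : comNzRingType) m :
  chebU (T:=T) m.+2 = (2%:R *: 'X) * chebU m.+1 - chebU m.
Proof. rewrite /chebU /=; by case: (chebU_pair m). Qed.

Lemma chebU0 (T : comNzRingType) : chebU (T:=T) 0 = 1. Proof. by []. Qed.
Lemma chebU1 (T : comNzRingType) : chebU (T:=T) 1 = 2%:R *: 'X.
Proof. by rewrite /chebU /= mulr1 subr0. Qed.

Section W.
Variables (R : rcfType) (v rho : R).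

Fixpoint Wp (m : nat) : R * R :=  (* (W m.+1, W m) *)
  match m with
  | 0%N => (1, 0)
  | m'.+1 => let: (x, y) := Wp m' in
      (- (2 * rho + 1) * x + (v / 2 + rho) * (v / 2 - rho) * y, x)
  end.
Definition W m := (Wp m).2.

Lemma W0 : W 0 = 0. Proof. by []. Qed.
Lemma W1 : W 1 = 1. Proof. by []. Qed.
Lemma Wrec m : W m.+2 = - (2 * rho + 1) * W m.+1 + (v / 2 + rho) * (v / 2 - rho) * W m.
Proof. rewrite /W /=; by case: (Wp m). Qed.

Variables (hv_ : 0 < v) (hr0_ : 0 <= rho) (hr_ : rho < v / 2).

Lemma gam2 : gam v rho ^+ 2 = (v / 2 + rho) * (v / 2 - rho).
Proof.
move: (hv_) (hr0_) (hr_) => hv hr0 hr.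
have h1 : 0 <= v / 2 - rho by lra.
have h2 : 0 <= v / 2 + rho by lra.
rewrite /gam sqr_sqrtr; last first.
  have := mulr_ge0 h1 h2. move=> h; apply: le_trans h _; rewrite le_eqVlt; apply/orP; left; apply/eqP; by field.
by field.
Qed.

Lemma gam_neq0 : gam v rho != 0.
Proof.
move: (hv_) (hr0_) (hr_) => hv hr0 hr.
apply/eqP => h. have := gam2. rewrite h expr0n /= => /esym /eqP.
rewrite mulf_eq0; case/orP => /eqP; lra.
Qed.

Lemma uuW m : uu v rho (m%:Z - 1) = (W m)%:C.
Proof.
case: m => [|m]; first by rewrite /uu /= horner0 mulr0.
have -> : (m.+1%:Z - 1 = m%:Z)%R by rewrite -addn1 PoszD addrK.
rewrite /uu /chebUz.
set g := (gam v rho)%:C. set x := - 'i * (2 * rho + 1)%:C / (2 * g).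
set y := - 'i * g.
have gn0 : g != 0.
  by rewrite /g fmorph_eq0 gam_neq0.
change (y ^+ m * (chebU m).[x] = (W m.+1)%:C).
have ii : 'i * 'i = -1 :> R[i] by rewrite -expr2 sqr_i.
have hxy : 2 * x * y = - (2 * rho + 1)%:C.
  rewrite /x /y.
  transitivity (('i * 'i) * ((2 * rho + 1)%:C * ((2 * g) / (2 * g)))); first by ring.
  rewrite ii divff ?mulf_neq0 ?gn0 //; first by ring.
  by rewrite pnatr_eq0.
have hyy : y * y = - ((v / 2 + rho) * (v / 2 - rho))%:C.
  rewrite /y -gam2 //. 
  transitivity (('i * 'i) * (g * g)); first by ring.
  by rewrite ii /g rmorphXn /= expr2; ring.
suff: y ^+ m * (chebU m).[x] = (W m.+1)%:C /\ y ^+ m.+1 * (chebU m.+1).[x] = (W m.+2)%:C by case.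
elim: m => [|m [IH1 IH2]].
  split; first by rewrite expr0 chebU0 hornerC mul1r.
  rewrite chebU1 expr1 Wrec W1 W0 hornerZ hornerX.
  rewrite mulr0 addr0 mulr1 rmorphN /= -hxy; ring.
split => //.
rewrite chebU_rec hornerD hornerN hornerM hornerZ hornerX Wrec.
rewrite rmorphD /= !rmorphM /= -IH1 -IH2.
transitivity ((2 * x * y) * (y ^+ m.+1 * (chebU m.+1).[x]) - (y * y) * (y ^+ m * (chebU m).[x])).
  by rewrite !exprS; ring.
rewrite hxy hyy rmorphN /= rmorphM /=. ring.
Qed.
Lemma uuP m : uu v rho (Posz m) = (W m.+1)%:C.
Proof. by rewrite -uuW -addn1 PoszD addrK. Qed.
End W.


Section M.
Variables (R : rcfType) (n s : nat) (v rho : R).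
Local Notation a := (v / 2 + rho).
Local Notation b := (v / 2 - rho).
Local Notation e := (s%:R + 1 - n%:R : R).
Local Notation W := (W v rho).

Definition Z m := W m.+2 + (e + a) * W m.+1 + e * a * W m.
Definition Q k := if (k <= s)%N then (- a) ^+ k * Z (s - k)
  else if (k < n)%N then 0 else (- a) ^+ s.+1.
Definition Cf := b * Z s - Z s.+1.

Lemma Zrec m : Z m.+2 = - (2 * rho + 1) * Z m.+1 + a * b * Z m.
Proof. rewrite /Z !Wrec; ring. Qed.

Lemma Z0 : Z 0 = e + a - (2 * rho + 1).
Proof. rewrite /Z Wrec W1 W0; ring. Qed.

Lemma Z1 : Z 1 = a + (b - 1) * Z 0.
Proof. rewrite Z0 /Z !Wrec W1 W0. by field. Qed.

Lemma R1 i : (i.+2 <= s)%N -> a * Q i = (1 + 2 * rho) * Q i.+1 + b * Q i.+2.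
Proof.
move=> h; rewrite /Q h (ltnW h) (ltnW (ltnW h)).
have -> : (s - i = (s - i.+2).+2)%N by lia.
have -> : (s - i.+1 = (s - i.+2).+1)%N by lia.
rewrite Zrec !exprS; ring.
Qed.

Lemma R2 : (0 < s)%N -> (s < n)%N -> Q s + Q n = a * Q s.-1 + b * Q s.
Proof.
move=> h0 hn; rewrite /Q leqnn leq_pred (leqNgt n s) hn ltnn subnn.
have -> : (s - s.-1 = 1)%N by lia.
have E : forall x : R, x ^+ s = x * x ^+ s.-1 by move=> x; rewrite -exprS prednK.
rewrite /= exprS !E Z1. by field.
Qed.

Lemma R3 : (s < n)%N -> a * Q s = (n%:R - s%:R - b) * Q n.
Proof.
move=> hn; rewrite /Q leqnn (leqNgt n s) hn ltnn subnn Z0 exprS /=. by field.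
Qed.

Lemma Qz k : (s < k)%N -> (k < n)%N -> Q k = 0.
Proof. by move=> h1 h2; rewrite /Q leqNgt h1 h2. Qed.

Lemma T1Q : (s < n)%N -> forall j, (j < s)%N -> Tl n.+1 Q j = a * Q j + b * Q j.+1.
Proof.
move=> hn.
suff H : forall d, (d < s)%N -> Tl n.+1 Q (s - d.+1) = a * Q (s - d.+1) + b * Q (s - d).
  move=> j hj; have := H (s - j.+1)%N; rewrite (_ : (s - (s - j.+1).+1 = j)%N); last by lia.
  rewrite (_ : (s - (s - j.+1) = j.+1)%N); last by lia. apply; lia.
elim=> [|d IH] hd.
- rewrite subn0 Tl_step; last by lia.
  rewrite (_ : (s - 1).+1 = s); last by lia.
  rewrite (Tl_last (s:=s)) //; last exact: Qz.
  have := R2 hd hn; rewrite (_ : s.-1 = (s - 1)%N); last by lia. by [].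
- rewrite Tl_step; last by lia.
  rewrite (_ : (s - d.+2).+1 = (s - d.+1)%N); last by lia.
  rewrite IH; last by lia.
  have H : a * Q (s - d.+2) = (1 + 2 * rho) * Q (s - d.+2).+1 + b * Q (s - d.+2).+2.
    apply: R1; lia.
  rewrite H (_ : (s - d.+2).+1 = (s - d.+1)%N); last by lia.
  rewrite (_ : (s - d.+1).+1 = (s - d)%N); last by lia.
  ring.
Qed.

Lemma sumQ : (s < n)%N -> \sum_(k < n.+1) Q k = Cf.
Proof.
move=> hn; rewrite sum_Tl //.
case: (posnP s) => hs.
- have HT : Tl n.+1 Q 0 = Q n.
    apply: (Tl_last (s:=s)); [by rewrite hs | lia | exact: Qz].
  have hn0 : (n <= 0)%N = false by lia.
  rewrite HT /Cf /Q hs /= hn0 ltnn Z1 expr0 expr1 subn0. by field.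
- rewrite (T1Q hn) // /Cf /Q leq0n hs subn0 expr0 expr1 mul1r.
  have E : Z s = Z s.-1.+1 by rewrite prednK.
  have E2 : Z s.+1 = Z s.-1.+2 by rewrite prednK.
  rewrite (_ : (s - 1 = s.-1)%N); last by lia.
  rewrite E E2 Zrec. by field.
Qed.

Variables (hv : 0 < v) (hr0 : 0 <= rho) (hr : rho < v / 2) (hsn : (s < n)%N)
  (hs1 : n%:R - 1 + rho <= v / 2 + s%:R) (hs2 : v / 2 + s%:R < n%:R + rho).

Lemma Qn_eq : Q n = (- a) ^+ s.+1.
Proof. by rewrite /Q leqNgt hsn ltnn. Qed.

Lemma a_gt0 : 0 < a.
Proof. move: (hv) (hr0) => ? ?; lra. Qed.

Lemma Qn_neq0 : Q n != 0.
Proof. rewrite Qn_eq expf_neq0 // oppr_eq0; have := a_gt0; by rewrite lt0r => /andP []. Qed.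

Lemma Qn2 : 0 < Q n * Q n.
Proof. have := Qn_neq0; rewrite -expr2 lt0r sqr_ge0 sqrf_eq0 => ->; by []. Qed.

Lemma Qpos : forall k, (k <= s)%N -> 0 < Q k * Q n.
Proof.
have ha := a_gt0. have hQ := Qn2.
have hns : s%:R + 1 <= (n%:R : R) by rewrite natr1 ler_nat.
move: (hv) (hr0) (hr) (hs1) (hs2) => hv' hr0' hr' hs1' hs2'.
have B1 : 0 < Q s * Q n.
  rewrite -(pmulr_rgt0 _ ha) mulrA R3 // -mulrA; apply: mulr_gt0 => //; lra.
have B2 : (0 < s)%N -> 0 < Q s.-1 * Q n.
  move=> h0; rewrite -(pmulr_rgt0 _ ha) -(pmulr_rgt0 _ ha).
  have E1 : a * Q s.-1 = Q s + Q n - b * Q s by rewrite (R2 h0 hsn); ring.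
  have E : a * (a * (Q s.-1 * Q n)) = ((1 - b) * (a * Q s) + a * Q n) * Q n.
    transitivity (a * ((a * Q s.-1) * Q n)); first by ring.
    rewrite E1; ring.
  rewrite E R3 //.
  set t := n%:R - s%:R - b.
  have ht0 : 0 < t by rewrite /t; lra.
  have ht1 : t <= 1 by rewrite /t; lra.
  have -> : ((1 - b) * (t * Q n) + a * Q n) * Q n = ((1 - b) * t + a) * (Q n * Q n) by ring.
  apply: mulr_gt0 => //.
  have -> : (1 - b) * t + a = (n%:R - s%:R) * (1 - t) + t * t + 2 * rho.
    rewrite /t; by field.
  have h1 : 0 <= (n%:R - s%:R) * (1 - t) by apply: mulr_ge0; lra.
  have h2 : 0 < t * t by apply: mulr_gt0.
  lra.
have Hall : forall d k, (s - k <= d)%N -> (k <= s)%N -> 0 < Q k * Q n.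
  elim=> [|d IH] k hd hk.
    by have -> : k = s by lia.
  case: (ltnP k s.-1) => hk2.
  - have H := R1 (i := k) (ltac:(lia)).
    rewrite -(pmulr_rgt0 _ ha) mulrA H mulrDl -!mulrA.
    apply: addr_gt0; apply: mulr_gt0; try lra.
    + apply: IH; lia.
    + apply: IH; lia.
  - case: (ltnP k s) => hk3.
    + have -> : k = s.-1 by lia. apply: B2; lia.
    + by have -> : k = s by lia.
move=> k hk; exact: (Hall (s - k)%N).
Qed.

Lemma cc_eq : cc n s v rho = Cf%:C.
Proof.
rewrite /cc !uuP // uuW // gam2 // /Cf /Z.
rewrite !addn2 !addn1.
rewrite !natrB //; last by lia.
rewrite !(rmorphB, rmorphD, rmorphM, rmorphN, fmorph_div, rmorph_nat, rmorph1) /=.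
ring.
lia.
Qed.

Lemma pform_eq k : pform n s v rho k = (Q k / Cf)%:C.
Proof.
rewrite /pform /= cc_eq /Q fmorph_div /=.
case: (leqP k s) => hk.
- have -> : (s%:Z - k%:Z + 1 = Posz (s - k).+1)%R by rewrite subzn // -addn1 PoszD.
  have -> : (s%:Z - k%:Z - 1 = (s - k)%:Z - 1)%R by rewrite subzn.
  have -> : (s%:Z - k%:Z = Posz (s - k))%R by rewrite subzn.
  rewrite !uuP // uuW // /Z.
  rewrite !(rmorphB, rmorphD, rmorphM, rmorphN, rmorphXn, fmorph_div, rmorph_nat, rmorph1) /=.
  rewrite mulrC; ring.
- case: (ltnP k n) => hkn; first by rewrite rmorph0 mul0r.
  rewrite !(rmorphB, rmorphD, rmorphM, rmorphN, rmorphXn, fmorph_div, rmorph_nat, rmorph1) /=.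
  by rewrite mulrC.
Qed.
End M.


Lemma caseA (R : rcfType) (n : nat) (v rho : R) :
  (1 <= n)%N -> 0 < v -> 0 <= rho -> 2 * n%:R + 2 * rho <= v ->
  let P := fun k : nat => ((k == n)%:R : R) in
  simplex (fun k : 'I_n.+1 => P k) /\ Nashp (payB n v rho) (fun k : 'I_n.+1 => P k).
Proof.
move=> hn hv hr hc P.
have hs : \sum_(k < n.+1) P k = 1.
  have e := sum_ind (fun _ => (1:R)) (ltnSn n); simpl in e.
  rewrite -[RHS]e; by apply: eq_bigr => k _; rewrite mulr1.
have hBX : forall j, BX n v rho P j = bb v rho j n.
  move=> j; rewrite /BX -(sum_ind (bb v rho j) (ltnSn n)); apply: eq_bigr => k _.
  by rewrite mulrC.
split.
  apply: simplex_of => // k _; rewrite /P; by case: (k == n).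
apply: (nash_of (M := bb v rho n n)) => //.
- move=> j hj; rewrite hBX; case: (ltngtP j n) => h.
  + rewrite /bb ltnNge (ltnW h) (ltn_eqF h) /= ltnn eqxx.
    have : 0 <= (j%:R : R) by exact: ler0n.
    have : (n%:R : R) <= v / 2 - rho by lra.
    lra.
  + lia.
  + by rewrite h.
- move=> j hj; rewrite /P; case: (eqVneq j n) => [-> _|hne]; first by rewrite hBX.
  by rewrite /= eqxx.
Qed.

Lemma caseB (R : rcfType) (n s : nat) (v rho : R) :
  0 < v -> 0 <= rho -> rho < v / 2 -> (s < n)%N ->
  n%:R - 1 + rho <= v / 2 + s%:R -> v / 2 + s%:R < n%:R + rho ->
  let P := fun k : nat => Q n s v rho k / Cf n s v rho in
  simplex (fun k : 'I_n.+1 => P k) /\ Nashp (payB n v rho) (fun k : 'I_n.+1 => P k).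
Proof.
move=> hv hr0 hr hsn hs1 hs2 P; rewrite {}/P.
have [C eC] : {C | Cf n s v rho = C} by exists (Cf n s v rho).
rewrite eC.
set P := fun k => Q n s v rho k / C.
have [Q' eQ] : {Q' | Q n s v rho = Q'} by exists (Q n s v rho).
have hQn := Qn2 hv hr0 hsn.
have hQnn : forall k, (k <= n)%N -> 0 <= Q n s v rho k * Q n s v rho n.
  move=> k hk; case: (leqP k s) => h1.
  - exact: ltW (Qpos hv hr0 hr hsn hs1 hs2 h1).
  - case: (ltnP k n) => h2.
    + by rewrite Qz // mul0r.
    + have -> : k = n by lia. exact: ltW.
have hC : 0 < C * Q n s v rho n.
  rewrite -eC -sumQ // mulr_suml (bigD1 ord_max) //=.
  apply: ltr_wpDr => //; apply: sumr_ge0 => k _; apply: hQnn; by have := ltn_ord k.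
have hCn0 : C != 0 by apply/eqP => h; move: hC; rewrite h mul0r ltxx.
have hQn0 := Qn_neq0 hv hr0 hsn.
have hP : forall k, P k = (Q n s v rho k * Q n s v rho n) / (C * Q n s v rho n).
  move=> k; rewrite /P; move: hCn0 hQn0; rewrite eQ => hCn0 hQn0; by field; rewrite hCn0 hQn0.
have hPnn : forall k, (k <= n)%N -> 0 <= P k.
  move=> k hk; rewrite hP; apply: divr_ge0; [exact: hQnn | exact: ltW].
have hPn : 0 < P n by rewrite hP; apply: divr_gt0.
have hsum : \sum_(k < n.+1) P k = 1.
  by rewrite /P -mulr_suml sumQ // eC divff.
split; first exact: (simplex_of hPnn hsum).
have hT1 : forall j, (j < s)%N -> Tl n.+1 P j = (v / 2 + rho) * P j + (v / 2 - rho) * P j.+1.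
  move=> j hj; rewrite /P.
  have -> : Tl n.+1 (fun k => Q n s v rho k / C) j = C^-1 * Tl n.+1 (Q n s v rho) j.
    rewrite -Tl_scale /Tl; apply: eq_bigr => k _; ring.
  rewrite T1Q //; ring.
have hz : forall k, (s < k)%N -> (k < n)%N -> P k = 0.
  by move=> k h1 h2; rewrite /P Qz // mul0r.
have h3 : (v / 2 + rho) * P s = (n%:R - s%:R - (v / 2 - rho)) * P n.
  rewrite /P !mulrA R3 //.
have hprof := profile hsn hT1 hz h3.
apply: (@nash_of R n v rho P (BX n v rho P 0)).
- move=> j hj; rewrite hprof //.
  case: (leqP j s) => h1; first by rewrite addr0.
  case: (ltnP j n) => h2; last by rewrite addr0.
  have hj1 : (s.+1 <= j)%N := h1.
  have : (s%:R + 1 : R) <= j%:R by rewrite natr1 ler_nat.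
  move=> hjr.
  have : n%:R - j%:R - (v / 2 - rho) <= 0 by lra.
  move=> hneg.
  have := mulr_le0_ge0 hneg (ltW hPn). lra.
- move=> j hj hPj; rewrite hprof //.
  case: (leqP j s) => h1; first by rewrite addr0.
  case: (ltnP j n) => h2; last by rewrite addr0.
  by move: hPj; rewrite hz // eqxx.
- exact: hsum.
Qed.


Unset Implicit Arguments.
Local Open Scope complex_scope.

Theorem theorem5p2 (R : rcfType) (n : nat) (v rho : R) :
  (1 <= n)%N -> 0 < v -> 0 <= rho -> rho < v / 2 ->
  exists p : 'I_n.+1 -> R,
    isESS (payB n v rho) p /\
    (forall q, isESS (payB n v rho) q -> q = p) /\
    (2 * n%:R + 2 * rho <= v -> forall k : 'I_n.+1, p k = ((k : nat) == n)%:R) /\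
    (v < 2 * n%:R + 2 * rho ->
       (exists! s : nat, (s < n)%N /\
          n%:R - 1 + rho <= v / 2 + s%:R /\ v / 2 + s%:R < n%:R + rho) /\
       (forall s : nat, (s < n)%N ->
          n%:R - 1 + rho <= v / 2 + s%:R -> v / 2 + s%:R < n%:R + rho ->
          forall k : 'I_n.+1, (p k)%:C = pform n s v rho k)).
Proof.
move=> hn hv hr0 hr.
case: (lerP (2 * n%:R + 2 * rho) v) => hc.
- have [hS hN] := @caseA R n v rho hn hv hr0 hc.
  exists (fun k : 'I_n.+1 => ((k : nat) == n)%:R).
  split; first exact: ess_of_nash.
  split; first exact: uniq_ess.
  split => // h; exfalso; lra.
- have epn : (n.-1%:R : R) = n%:R - 1 by rewrite -[in RHS](prednK hn) -natr1 addrK.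
  have hex : exists m : nat, n%:R - 1 + rho <= v / 2 + m%:R.
    exists n.-1; rewrite epn; lra.
  case: (ex_minnP hex) => s0 hs01 hmin.
  have hs0n : (s0 < n)%N.
    have := hmin n.-1; rewrite epn => /(_ ltac:(lra)); lia.
  have hs02 : v / 2 + s0%:R < n%:R + rho.
    case: s0 hs01 hmin hs0n => [|m] hs01 hmin hs0n; first by rewrite /=; lra.
    have hm : ~~ (n%:R - 1 + rho <= v / 2 + m%:R).
      by apply/negP => /hmin; rewrite ltnn.
    rewrite -ltNge in hm; have -> : (m.+1%:R : R) = m%:R + 1 by rewrite natr1.
    lra.
  have [hS hN] := @caseB R n s0 v rho hv hr0 hr hs0n hs01 hs02.
  exists (fun k : 'I_n.+1 => Q n s0 v rho k / Cf n s0 v rho).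
  split; first exact: ess_of_nash.
  split; first exact: uniq_ess.
  split; first by move=> h; exfalso; lra.
  move=> _.
  have huniq : forall s, (s < n)%N -> n%:R - 1 + rho <= v / 2 + s%:R ->
      v / 2 + s%:R < n%:R + rho -> s = s0.
    move=> s hsn hs1 hs2; apply/eqP; rewrite eqn_leq hmin // andbT.
    rewrite leqNgt; apply/negP => hlt.
    have : (s0%:R + 1 : R) <= s%:R by rewrite natr1 ler_nat.
    lra.
  split.
  + exists s0; split; first by split.
    by move=> s [hsn [hs1 hs2]]; apply/esym/huniq.
  + move=> s hsn hs1 hs2 k; rewrite (huniq s hsn hs1 hs2).
    by rewrite (pform_eq hv hr0 hr hs0n hs01 hs02).
Qed.
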